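(* Let $n\geq 3$ and let $\rho: B_n \rightarrow GL_n(\mathbb{C})$ be a non-trivial homogeneous $2$-local representation of $B_n$. Let $\hat{\rho}: SM_n \rightarrow M_n(\mathbb{C})$ be a $\Phi$-type extension of $\rho$ to $SM_n$. Then $\hat{\rho}$ is equivalent to one of the following three representations, where for $1\le i\le n-1$ and $X\in M_2(\mathbb{C})$, $s\in\mathbb{C}$ we write $E_i(s;X)=\mathrm{diag}(sI_{i-1},X,sI_{n-i-1})$ and $D_i(X)=E_i(1;X)$: (1) $\hat{\rho}_1(\sigma_i)=D_i\begin{pmatrix} a&\frac{1-a}{c}\\ c&0\end{pmatrix}$ and $\hat{\rho}_1(\tau_i)=E_i\left(u+v+w;\begin{pmatrix} ua+w & \frac{u(1-a)+v}{c}\\ uc+\frac{vc}{1-a} & \frac{-va}{1-a}+w\end{pmatrix}\right)$, where $a,c,u,v,w\in\mathbb{C}$, $a\neq 1$, $c\neq 0$; (2) $\hat{\rho}_2(\sigma_i)=D_i\begin{pmatrix} 0&\frac{1-d}{c}\\ c&d\end{pmatrix}$ and $\hat{\rho}_2(\tau_i)=E_i\left(u+v+w;\begin{pmatrix} \frac{-vd}{1-d}+w & \frac{u(1-d)+v}{c}\\ uc+\frac{vc}{1-d} & ud+w\end{pmatrix}\right)$, where $c,d,u,v,w\in\mathbb{C}$, $d\neq 1$, $c\neq 0$; (3) $\hat{\rho}_3(\sigma_i)=D_i\begin{pmatrix} 0&b\\ c&0\end{pmatrix}$ and $\hat{\rho}_3(\tau_i)=E_i\left(u+v+w;\begin{pmatrix}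 w & ub+\frac{v}{c}\\ uc+\frac{v}{b} & w\end{pmatrix}\right)$, where $b,c,u,v,w\in\mathbb{C}$, $b\neq 0$, $c\neq 0$; in each case for all $1\le i\le n-1$.
   Context: The braid group $B_n$ has generators $\sigma_1,\dots,\sigma_{n-1}$ with relations $\sigma_i\sigma_{i+1}\sigma_i=\sigma_{i+1}\sigma_i\sigma_{i+1}$ ($1\le i\le n-2$) and $\sigma_i\sigma_j=\sigma_j\sigma_i$ ($|i-j|\ge2$). The singular braid monoid $SM_n$ is the monoid generated by $\sigma_1^{\pm1},\dots,\sigma_{n-1}^{\pm1},\tau_1,\dots,\tau_{n-1}$ subject to $\sigma_i\sigma_i^{-1}=\sigma_i^{-1}\sigma_i=1$, the braid relations above, and $\tau_i\tau_j=\tau_j\tau_i$, $\tau_i\sigma_j=\sigma_j\tau_i$ for $|i-j|\ge 2$, $\tau_i\sigma_i=\sigma_i\tau_i$, and $\sigma_i\sigma_{i+1}\tau_i=\tau_{i+1}\sigma_i\sigma_{i+1}$, $\sigma_{i+1}\sigma_i\tau_{i+1}=\tau_i\sigma_{i+1}\sigma_i$ for $1\le i\le n-2$. A representation $\rho:B_n\to GL_n(\mathbb{C})$ is homogeneous $2$-local if there is $M\in M_2(\mathbb{C})$ with $\rho(\sigma_i)=\mathrm{diag}(I_{i-1},M,I_{n-i-1})$ for all $1\le i\le n-1$; ''non-trivial'' means not sending every $\sigma_i$ to the identity. A $\Phi$-type extension of $\rho$ to $SM_n$ is a monoid homomorphism $\hat\rho:SM_n\to M_n(\mathbb{C})$ for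 which there exist $u,v,w\in\mathbb{C}$ with $\hat\rho(\sigma_i^{\pm1})=\rho(\sigma_i)^{\pm1}$ and $\hat\rho(\tau_i)=u\rho(\sigma_i)+v\rho(\sigma_i)^{-1}+wI_n$ for all $1\le i\le n-1$ (any such choice of $u,v,w$ defines a representation of $SM_n$). Two representations are equivalent if they are conjugate by a fixed invertible matrix. *)

(* Defs.v *)
From HB Require Import structures.
From mathcomp Require Import all_boot all_order all_algebra all_field.
Set Implicit Arguments. Unset Strict Implicit. Unset Printing Implicit Defensive.
Import Order.TTheory GRing.Theory Num.Theory.
Local Open Scope ring_scope.

Definition mx2 (a b c d : algC) : 'M[algC]_2 :=
  \matrix_(j < 2, k < 2)
    if val j == 0%N then (if val k == 0%N then a else b)
    else (if val k == 0%N then c else d).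

(* E_i(s; X) = diag(s I_{i-1}, X, s I_{n-i-1}), generator index i in 1..n-1:
   the block X occupies (0-based) rows/columns i-1 and i. *)
Definition Emx (n i : nat) (s : algC) (X : 'M[algC]_2) : 'M[algC]_n :=
  \matrix_(j < n, k < n)
    if ((i.-1 <= j <= i)%N && (i.-1 <= k <= i)%N)
    then X (inord (j - i.-1)) (inord (k - i.-1))
    else (j == k)%:R * s.

Definition Dmx (n i : nat) (X : 'M[algC]_2) : 'M[algC]_n := Emx n i 1 X.

Definition braid_rep (n : nat) (s : nat -> 'M[algC]_n) : Prop :=
  (forall i, (0 < i < n)%N -> s i \in unitmx) /\
  (forall i, (0 < i)%N -> (i + 1 < n)%N ->
     s i *m s (i + 1)%N *m s i = s (i + 1)%N *m s i *m s (i + 1)%N) /\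
  (forall i j, (0 < i < n)%N -> (0 < j < n)%N -> (i + 2 <= j)%N ->
     s i *m s j = s j *m s i).

Definition hom_2local_rep (n : nat) (rho : nat -> 'M[algC]_n) : Prop :=
  braid_rep rho /\ exists M : 'M[algC]_2, forall i, (0 < i < n)%N -> rho i = Dmx n i M.

(* (s, t) : images of sigma_i and tau_i define a monoid homomorphism
   SM_n -> M_n(C), where s i must be invertible (sigma_i^{-1} |-> invmx (s i)). *)
Definition sm_rep (n : nat) (s t : nat -> 'M[algC]_n) : Prop :=
  braid_rep s /\
  (forall i j, (0 < i < n)%N -> (0 < j < n)%N -> (i + 2 <= j)%N ->
     t i *m t j = t j *m t i /\ t i *m s j = s j *m t i /\ t j *m s i = s i *m t j) /\
  (forall i, (0 < i < n)%N -> t i *m s i = s i *m t i) /\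
  (forall i, (0 < i)%N -> (i + 1 < n)%N ->
     s i *m s (i + 1)%N *m t i = t (i + 1)%N *m s i *m s (i + 1)%N /\
     s (i + 1)%N *m s i *m t (i + 1)%N = t i *m s (i + 1)%N *m s i).

Definition phi_type_ext (n : nat) (rho tau : nat -> 'M[algC]_n) : Prop :=
  sm_rep rho tau /\
  exists u v w : algC, forall i, (0 < i < n)%N ->
    tau i = u *: rho i + v *: invmx (rho i) + w%:M.

Definition equiv_sm (n : nat) (rho tau rho' tau' : nat -> 'M[algC]_n) : Prop :=
  exists P : 'M[algC]_n, P \in unitmx /\
    forall i, (0 < i < n)%N ->
      invmx P *m rho i *m P = rho' i /\ invmx P *m tau i *m P = tau' i.

Definition rho1 n (a c : algC) := fun i => Dmx n i (mx2 a ((1 - a) / c) c 0).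
Definition tau1 n (a c u v w : algC) := fun i =>
  Emx n i (u + v + w)
    (mx2 (u * a + w) ((u * (1 - a) + v) / c)
         (u * c + v * c / (1 - a)) (- v * a / (1 - a) + w)).
Definition rho2 n (c d : algC) := fun i => Dmx n i (mx2 0 ((1 - d) / c) c d).
Definition tau2 n (c d u v w : algC) := fun i =>
  Emx n i (u + v + w)
    (mx2 (- v * d / (1 - d) + w) ((u * (1 - d) + v) / c)
         (u * c + v * c / (1 - d)) (u * d + w)).
Definition rho3 n (b c : algC) := fun i => Dmx n i (mx2 0 b c 0).
Definition tau3 n (b c u v w : algC) := fun i =>
  Emx n i (u + v + w) (mx2 w (u * b + v / c) (u * c + v / b) w).

(* Main.v *)
Require Import Defs.
From HB Require Import structures.
From mathcomp Require Import all_boot all_order all_algebra all_field.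
From mathcomp Require Import zify ring.
Import Order.TTheory GRing.Theory Num.Theory.
Local Open Scope ring_scope.


Definition blk (i j : nat) := (i.-1 <= j <= i)%N.

Lemma EmxE n i s X (j k : 'I_n) : Emx n i s X j k =
  if blk i j && blk i k then X (inord (j - i.-1)) (inord (k - i.-1))
  else (j == k)%:R * s.
Proof. by rewrite mxE. Qed.

Lemma blk_sum m i (F : 'I_m.+1 -> algC) : (0 < i < m.+1)%N ->
  \sum_(l : 'I_m.+1 | blk i l) F l = F (inord i.-1) + F (inord i).
Proof.
move=> /andP[i0 im].
rewrite (bigD1 (inord i.-1)) /=; last by rewrite /blk inordK; lia.
rewrite (bigD1 (inord i)) /=; last first.
  by rewrite /blk -val_eqE /= !inordK; lia.
rewrite big1 ?addr0 // => l /andP[/andP[Hb H1] H2]; exfalso.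
by move: Hb H1 H2; rewrite /blk -!val_eqE /= !inordK; lia.
Qed.

Lemma inord_eq2 i (j k : nat) : (0 < i)%N -> blk i j -> blk i k ->
  ((inord (j - i.-1) : 'I_2) == inord (k - i.-1)) = (j == k).
Proof.
rewrite /blk => i0 Hj Hk; rewrite -val_eqE /= !inordK; lia.
Qed.


Lemma blk_inord m i : (0 < i < m.+1)%N ->
  blk i (inord i.-1 : 'I_m.+1) /\ blk i (inord i : 'I_m.+1).
Proof. move=> /andP[i0 im]; rewrite /blk !inordK; lia. Qed.

Lemma EmxM m i s t X Y : (0 < i < m.+1)%N ->
  Emx m.+1 i s X *m Emx m.+1 i t Y = Emx m.+1 i (s * t) (X *m Y).
Proof.
move=> him; have /andP[i0 im] := him.
have [B1 B2] := @blk_inord m i him.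
apply/matrixP=> j k; rewrite [LHS]mxE [RHS]EmxE (bigID (fun l : 'I_m.+1 => blk i l)) /=.
case Bj: (blk i j) => /=.
- rewrite [X in _ + X]big1 ?addr0; last first.
    move=> l Hl; rewrite EmxE Bj (negbTE Hl) /=.
    have -> : (j == l) = false.
      by apply/negP=> /eqP E; move: Hl; rewrite -E Bj.
    by rewrite mul0r mul0r.
  rewrite blk_sum // !EmxE B1 B2 Bj /=.
  have e0 : (inord ((inord (i.-1) : 'I_m.+1) - i.-1) : 'I_2) = ord0.
    by apply: ord_inj; rewrite /= !inordK ?subnn //; lia.
  have e1 : (inord ((inord i : 'I_m.+1) - i.-1) : 'I_2) = lift ord0 ord0.
    by apply: ord_inj; rewrite /= !inordK /bump /=; lia.
  rewrite e0 e1.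
  case Bk: (blk i k) => /=.
    by rewrite mxE !big_ord_recl big_ord0 addr0.
  have -> : (j == k) = false by apply/negP=> /eqP E; move: Bk; rewrite -E Bj.
  have -> : ((inord i.-1 : 'I_m.+1) == k) = false.
    by apply/negP=> /eqP E; move: Bk; rewrite -E B1.
  have -> : ((inord i : 'I_m.+1) == k) = false.
    by apply/negP=> /eqP E; move: Bk; rewrite -E B2.
  by rewrite !mul0r !mulr0 addr0.
- rewrite big1 ?add0r; last first.
    move=> l Hl; rewrite EmxE Bj /=.
    have -> : (j == l) = false.
      by apply/negP=> /eqP E; move: Hl; rewrite -E Bj.
    by rewrite mul0r mul0r.
  rewrite (bigD1 j) /=; last by rewrite Bj.
  rewrite big1 ?addr0; last first.
    move=> l /andP[_ Hl]; rewrite EmxE Bj /= eq_sym (negbTE Hl).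
    by rewrite mul0r mul0r.
  rewrite !EmxE Bj /= eqxx.
  by case: (j == k); rewrite /= ?mul1r ?mul0r ?mulr0.
Qed.

Lemma Emx1 m i : (0 < i < m.+1)%N -> Emx m.+1 i 1 1%:M = 1%:M.
Proof.
move=> /andP[i0 im]; apply/matrixP=> j k; rewrite EmxE [RHS]mxE.
case B: (blk i j && blk i k); last by rewrite mulr1.
move/andP: B => [Bj Bk]; rewrite mxE inord_eq2 //.
Qed.

Lemma Emx_lin m i u v w X Y : (0 < i < m.+1)%N ->
  u *: Emx m.+1 i 1 X + v *: Emx m.+1 i 1 Y + w%:M
  = Emx m.+1 i (u + v + w) (u *: X + v *: Y + w%:M).
Proof.
move=> /andP[i0 im]; apply/matrixP=> j k.
rewrite !mxE -/(blk i j) -/(blk i k).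
case B: (blk i j && blk i k).
  by move/andP: B => [Bj Bk]; rewrite inord_eq2.
by case: (j == k); rewrite /= ?mul1r ?mul0r ?mulr0 ?mulr1 ?addr0.
Qed.

Set Implicit Arguments.


Definition sup3 m (A : 'M[algC]_(m.+3)) :=
  forall j l : 'I_(m.+3), (j < 3)%N -> (3 <= l)%N -> A j l = 0.

Lemma sup3M m (A B : 'M[algC]_(m.+3)) : sup3 A -> sup3 B -> sup3 (A *m B).
Proof.
move=> HA HB j l Hj Hl; rewrite mxE big1 // => p _.
case: (ltnP p 3) => Hp; first by rewrite HB ?mulr0.
by rewrite HA ?mul0r.
Qed.

Lemma sup3D m i s X : (i <= 2)%N -> sup3 (Emx m.+3 i s X).
Proof.
move=> Hi j l Hj Hl; rewrite EmxE /blk.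
have -> : (i.-1 <= l <= i)%N = false by apply/negP; lia.
have -> : (j == l) = false by apply/negP => /eqP E; move: Hl; rewrite -E; lia.
by rewrite andbF mul0r.
Qed.

Lemma widen_inord m (x : 'I_3) (le : (3 <= m.+3)%N) : widen_ord le x = inord x.
Proof. by apply: ord_inj; rewrite /= inordK //; have := ltn_ord x; lia. Qed.

Lemma mulE3 m (A B : 'M[algC]_(m.+3)) x (k : 'I_(m.+3)) : sup3 A -> (x < 3)%N ->
  (A *m B) (inord x) k = A (inord x) (inord 0) * B (inord 0) k
     + A (inord x) (inord 1) * B (inord 1) k + A (inord x) (inord 2) * B (inord 2) k.
Proof.
move=> HA Hx; rewrite mxE (bigID (fun l : 'I_(m.+3) => (l < 3)%N)) /=.
rewrite [X in _ + X]big1 ?addr0; last first.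
  by move=> l; rewrite -leqNgt => Hl; rewrite HA ?mul0r // inordK //; lia.
rewrite big_ord_narrow !big_ord_recl big_ord0 addr0 addrA !widen_inord.
done.
Qed.

Lemma Dent m i s X x y : (x < m.+3)%N -> (y < m.+3)%N ->
  Emx m.+3 i s X (inord x) (inord y) =
  if blk i x && blk i y then X (inord (x - i.-1)) (inord (y - i.-1))
  else (x == y)%:R * s.
Proof.
move=> Hx Hy; rewrite EmxE.
have -> : ((inord x : 'I_m.+3) == inord y) = (x == y).
  by rewrite -(inj_eq (@ord_inj _)) !inordK.
by rewrite !inordK.
Qed.

Lemma mx2E a b c d x y : (x < 2)%N -> (y < 2)%N ->
  mx2 a b c d (inord x) (inord y) =
  if x == 0%N then (if y == 0%N then a else b) else (if y == 0%N then c else d).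
Proof. by move=> Hx Hy; rewrite mxE /= !inordK. Qed.


Lemma eq_sub_ring (x y p : algC) : x = y -> p = x - y -> p = 0.
Proof. by move=> -> ->; rewrite subrr. Qed.

Lemma braid_eqs m a b c d :
  let D1 := Dmx m.+3 1 (mx2 a b c d) in let D2 := Dmx m.+3 2 (mx2 a b c d) in
  D1 *m D2 *m D1 = D2 *m D1 *m D2 ->
  [/\ a * (a + b * c - 1) = 0, d * (d + b * c - 1) = 0, a * b * d = 0,
      a * c * d = 0 & a * d * (d - a) = 0].
Proof.
move=> D1 D2 H.
have S1 : sup3 D1 by apply: sup3D.
have S2 : sup3 D2 by apply: sup3D.
have S12 := sup3M S1 S2. have S21 := sup3M S2 S1.
have E x y : (x < 3)%N -> (y < 3)%N ->
  (D1 *m D2 *m D1) (inord x) (inord y) = (D2 *m D1 *m D2) (inord x) (inord y).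
  by move=> _ _; rewrite H.
have T x y (Hx : (x < 3)%N) (Hy : (y < 3)%N) := E x y Hx Hy.
move: (T 0 0 erefl erefl) (T 2 2 erefl erefl) (T 0 1 erefl erefl)
      (T 1 0 erefl erefl) (T 1 1 erefl erefl).
rewrite !mulE3 // /D1 /D2 !Dent //= !mx2E //=.
move=> e1 e2 e3 e4 e5.
split.
- by apply: (eq_sub_ring e1); ring.
- by apply: (eq_sub_ring (esym e2)); ring.
- by apply: (eq_sub_ring e3); ring.
- by apply: (eq_sub_ring e4); ring.
- by apply: (eq_sub_ring e5); ring.
Qed.


Lemma mx2_eq (A : 'M[algC]_2) a b c d :
  A ord0 ord0 = a -> A ord0 (lift ord0 ord0) = b ->
  A (lift ord0 ord0) ord0 = c -> A (lift ord0 ord0) (lift ord0 ord0) = d ->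
  A = mx2 a b c d.
Proof.
move=> Ha Hb Hc Hd; apply/matrixP => j k; rewrite mxE.
case: j => [[|[|//]] Hj]; case: k => [[|[|//]] Hk] /=.
- by rewrite -Ha; congr (A _ _); apply: ord_inj.
- by rewrite -Hb; congr (A _ _); apply: ord_inj.
- by rewrite -Hc; congr (A _ _); apply: ord_inj.
- by rewrite -Hd; congr (A _ _); apply: ord_inj.
Qed.

Lemma mx2_mulinv a b c d : a * d - b * c != 0 ->
  mx2 a b c d *m mx2 (d / (a * d - b * c)) (- b / (a * d - b * c))
     (- c / (a * d - b * c)) (a / (a * d - b * c)) = 1%:M.
Proof.
move=> H.
have -> : (1%:M : 'M[algC]_2) = mx2 1 0 0 1.
  by apply: mx2_eq; rewrite mxE.
apply: mx2_eq; rewrite mxE !big_ord_recl big_ord0 !mxE /=; field.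
all: exact: H.
Qed.

Lemma Dmx_inv m i X Y : (0 < i < m.+1)%N -> X *m Y = 1%:M ->
  Dmx m.+1 i X \in unitmx -> invmx (Dmx m.+1 i X) = Dmx m.+1 i Y.
Proof.
move=> Hi XY U.
have P : Dmx m.+1 i X *m Dmx m.+1 i Y = 1%:M by rewrite /Dmx EmxM // mulr1 XY Emx1.
by rewrite -[RHS]mul1mx -(mulVmx U) -mulmxA P mulmx1.
Qed.

Lemma row_zero1 m (X : 'M[algC]_2) x : (x < 2)%N ->
  (forall y, (y < 2)%N -> X (inord x) (inord y) = 0) -> Dmx m.+3 1 X \notin unitmx.
Proof.
move=> Hx HX; apply/negP => U.
have := mulmxV U; move/matrixP/(_ (inord x) (inord x)).
rewrite !mxE big1 ?eqxx; first by move/esym/eqP; rewrite oner_eq0.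
move=> l _.
rewrite EmxE /blk /= inordK; last lia.
case Bl: (l <= 1)%N.
  have -> : (x <= 1)%N by lia.
  rewrite !subn0.
  have -> : (inord l : 'I_2) = inord (inord l : 'I_2) by apply: ord_inj; rewrite !inordK //; lia.
  by rewrite HX ?mul0r // inordK; lia.
have -> : ((inord x : 'I_m.+3) == l) = false.
  by apply/negP => /eqP E; move: Bl; rewrite -E inordK; lia.
by rewrite andbF mul0r mul0r.
Qed.

Lemma col_zero1 m (X : 'M[algC]_2) x : (x < 2)%N ->
  (forall y, (y < 2)%N -> X (inord y) (inord x) = 0) -> Dmx m.+3 1 X \notin unitmx.
Proof.
move=> Hx HX; apply/negP => U.
have := mulVmx U; move/matrixP/(_ (inord x) (inord x)).
rewrite !mxE big1 ?eqxx; first by move/esym/eqP; rewrite oner_eq0.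
move=> l _.
rewrite EmxE /blk /= inordK; last lia.
case Bl: (l <= 1)%N.
  have -> : (x <= 1)%N by lia.
  rewrite !subn0.
  have -> : (inord l : 'I_2) = inord (inord l : 'I_2) by apply: ord_inj; rewrite !inordK //; lia.
  by rewrite HX ?mulr0 // inordK; lia.
have -> : (l == (inord x : 'I_m.+3)) = false.
  by apply/negP => /eqP E; move: Bl; rewrite E inordK; lia.
by rewrite /= ?andbF ?andFb mul0r mulr0.
Qed.

Unset Implicit Arguments.

Set Bullet Behavior "Strict Subproofs".

Theorem theorem3p5 (n : nat) (rho tau : nat -> 'M[algC]_n) :
  (3 <= n)%N ->
  hom_2local_rep rho ->
  ~ (forall i, (0 < i < n)%N -> rho i = 1%:M) ->
  phi_type_ext rho tau ->
  (exists a c u v w : algC, a != 1 /\ c != 0 /\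
     equiv_sm rho tau (rho1 n a c) (tau1 n a c u v w)) \/
  (exists c d u v w : algC, d != 1 /\ c != 0 /\
     equiv_sm rho tau (rho2 n c d) (tau2 n c d u v w)) \/
  (exists b c u v w : algC, b != 0 /\ c != 0 /\
     equiv_sm rho tau (rho3 n b c) (tau3 n b c u v w)).
Proof.
move=> Hn [[Hu [Hb _]] [M HM]] Hnt [_ [u [v [w Htau]]]].
have [m Em] : exists m, n = m.+3 by exists (n - 3)%N; lia.
subst n.
have [a [b [c [d HMe]]]] : exists a b c d, M = mx2 a b c d.
  by exists (M ord0 ord0), (M ord0 (lift ord0 ord0)), (M (lift ord0 ord0) ord0),
    (M (lift ord0 ord0) (lift ord0 ord0)); apply: mx2_eq.
subst M.
have [e1 e2 e3 e4 e5] : [/\ a * (a + b * c - 1) = 0, d * (d + b * c - 1) = 0, a * b * d = 0,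
      a * c * d = 0 & a * d * (d - a) = 0].
  have HB := Hb 1%N erefl erefl; rewrite !HM // in HB.
  exact: (braid_eqs HB).
have U1 : Dmx m.+3 1 (mx2 a b c d) \in unitmx by rewrite -HM // Hu.
have row0 : a = 0 -> b = 0 -> False.
  move=> a0 b0; move: U1; apply/negP; apply: (@row_zero1 _ _ 0) => // y Hy.
  by rewrite mx2E //; case: y Hy => [|[|]].
have row1 : c = 0 -> d = 0 -> False.
  move=> c0 d0; move: U1; apply/negP; apply: (@row_zero1 _ _ 1) => // y Hy.
  by rewrite mx2E //; case: y Hy => [|[|]].
have col0 : a = 0 -> c = 0 -> False.
  move=> a0 c0; move: U1; apply/negP; apply: (@col_zero1 _ _ 0) => // y Hy.
  by rewrite mx2E //; case: y Hy => [|[|]].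
have col1 : b = 0 -> d = 0 -> False.
  move=> b0 d0; move: U1; apply/negP; apply: (@col_zero1 _ _ 1) => // y Hy.
  by rewrite mx2E //; case: y Hy => [|[|]].
have Hinv i : (0 < i < m.+3)%N -> a * d - b * c != 0 ->
   tau i = Emx m.+3 i (u + v + w) (u *: mx2 a b c d + v *: mx2 (d / (a * d - b * c)) (- b / (a * d - b * c))
     (- c / (a * d - b * c)) (a / (a * d - b * c)) + w%:M).
  move=> Hi Hdet; rewrite Htau // HM // (@Dmx_inv m.+2 i _ _ Hi (@mx2_mulinv a b c d Hdet)); last by rewrite -HM // Hu.
  by rewrite Emx_lin.
have I1 : (1%:M : 'M[algC]_2) = mx2 1 0 0 1 by apply: mx2_eq; rewrite mxE.
have [a0|a0] := eqVneq a 0; have [d0|d0] := eqVneq d 0.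
- right; right.
  have b0 : b != 0 by apply/eqP => b0; exact: row0 a0 b0.
  have c0 : c != 0 by apply/eqP => c0; exact: row1 c0 d0.
  exists b, c, u, v, w; split => //; split => //.
  exists 1%:M; split; first exact: unitmx1.
  move=> i Hi; rewrite invmx1 !mul1mx !mulmx1; split.
    by rewrite HM // /rho3 a0 d0.
  have Hdet : a*d - b*c != 0 by rewrite a0 d0 mul0r sub0r oppr_eq0 mulf_neq0.
  rewrite Hinv // /tau3 /=; congr (Emx _ _ _ _); apply: mx2_eq; rewrite !mxE /= a0 d0; field.
  all: by rewrite ?b0 ?c0.
- right; left.
  have f : d + b * c - 1 = 0 by move/eqP: e2; rewrite mulf_eq0 (negbTE d0) => /eqP.
  have c0 : c != 0 by apply/eqP => c0; exact: col0 a0 c0.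
  have d1 : d != 1.
    apply/eqP => d1; move: f; rewrite d1 addrAC subrr add0r => /eqP.
    rewrite mulf_eq0 => /orP[/eqP b0|/eqP c00]; [exact: row0 a0 b0 | by rewrite c00 eqxx in c0].
  have d1' : 1 - d != 0 by rewrite subr_eq0 eq_sym.
  have hb : b = (1 - d) / c.
    apply: (mulIf c0); rewrite divfK //; apply/eqP; rewrite -subr_eq0; apply/eqP; rewrite -f; ring.
  exists c, d, u, v, w; split => //; split => //.
  exists 1%:M; split; first exact: unitmx1.
  move=> i Hi; rewrite invmx1 !mul1mx !mulmx1; split.
    by rewrite HM // /rho2 a0 hb.
  have Hdet : a*d - b*c != 0.
    rewrite a0 hb mul0r sub0r oppr_eq0 divfK // subr_eq0 eq_sym //.
  rewrite Hinv // /tau2 /=; congr (Emx _ _ _ _); apply: mx2_eq; rewrite !mxE /= a0 hb; field.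
  all: by rewrite ?c0 ?d1' ?a1'.
- left.
  have f : a + b * c - 1 = 0 by move/eqP: e1; rewrite mulf_eq0 (negbTE a0) => /eqP.
  have c0 : c != 0 by apply/eqP => c0; exact: row1 c0 d0.
  have a1 : a != 1.
    apply/eqP => a1; move: f; rewrite a1 addrAC subrr add0r => /eqP.
    rewrite mulf_eq0 => /orP[/eqP b0|/eqP c00]; [exact: col1 b0 d0 | by rewrite c00 eqxx in c0].
  have a1' : 1 - a != 0 by rewrite subr_eq0 eq_sym.
  have hb : b = (1 - a) / c.
    apply: (mulIf c0); rewrite divfK //; apply/eqP; rewrite -subr_eq0; apply/eqP; rewrite -f; ring.
  exists a, c, u, v, w; split => //; split => //.
  exists 1%:M; split; first exact: unitmx1.
  move=> i Hi; rewrite invmx1 !mul1mx !mulmx1; split.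
    by rewrite HM // /rho1 d0 hb.
  have Hdet : a*d - b*c != 0.
    rewrite d0 hb mulr0 sub0r oppr_eq0 divfK // subr_eq0 eq_sym //.
  rewrite Hinv // /tau1 /=; congr (Emx _ _ _ _); apply: mx2_eq; rewrite !mxE /= d0 hb; field.
  all: by rewrite ?c0 ?d1' ?a1'.
- exfalso; apply: Hnt => i Hi.
  have b0 : b = 0 by move/eqP: e3; rewrite !mulf_eq0 (negbTE a0) (negbTE d0) orbF => /eqP.
  have c0 : c = 0 by move/eqP: e4; rewrite !mulf_eq0 (negbTE a0) (negbTE d0) orbF => /eqP.
  have da : d = a.
    by move/eqP: e5; rewrite !mulf_eq0 (negbTE a0) (negbTE d0) subr_eq0 => /eqP.
  have a1 : a = 1.
    move/eqP: e1; rewrite mulf_eq0 (negbTE a0) b0 mul0r addr0 subr_eq0 => /eqP //.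
  by rewrite HM // b0 c0 da a1 -I1 /Dmx Emx1.
Qed.
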